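(* Let $d_1,d_2\ge1$ be integers, $p_{i0}<\cdots<p_{id_i}$ reals for $i=1,2$, and $f_i:\{p_{i0},\dots,p_{id_i}\}\to\mathbb{R}$ arbitrary. Let $\sigma=(\sigma_1,\sigma_2)$ with $\sigma_i$ a permutation of $\{0,\dots,d_i\}$ such that $f_i(p_{i,\sigma_i(0)})\le\cdots\le f_i(p_{i,\sigma_i(d_i)})$ for $i=1,2$, and let $\tau=(\tau_1,\tau_2)$ be permutations with $f_1(p_{1,\tau_1(0)})\le\cdots\le f_1(p_{1,\tau_1(d_1)})$ and $f_2(p_{2,\tau_2(0)})\ge\cdots\ge f_2(p_{2,\tau_2(d_2)})$. Put $\psi^\sigma(\boldsymbol{j})=f_1(p_{1,\sigma_1(j_1)})f_2(p_{2,\sigma_2(j_2)})$ and $\psi^\tau(\boldsymbol{j})=f_1(p_{1,\tau_1(j_1)})f_2(p_{2,\tau_2(j_2)})$ for $\boldsymbol{j}\in\{0,\dots,d_1\}\times\{0,\dots,d_2\}$, and $N=d_1+d_2$. Then the set of $(\boldsymbol{x},\boldsymbol{z},\mu)$ with $\boldsymbol{z}\in\{0,1\}^{d_1+d_2}$, $(x_i,\boldsymbol{z}_i)\in B_i$ for $i=1,2$, $\boldsymbol{z}'=(L^\sigma)^{-1}(\boldsymbol{z})$, $\boldsymbol{z}''=(L^\tau)^{-1}(\boldsymbol{z})$ and, for every $\pi\in\Pi$ (with point representation $\boldsymbol{j}^0,\dots,\boldsymbol{j}^N$), $$\mu\le\psi^\sigma(\boldsymbol{j}^0)+\sum_{t\in[N]}(\psi^\sigma(\boldsymbol{j}^t)-\psi^\sigma(\boldsymbol{j}^{t-1}))z'_{\pi_t},\qquad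 \mu\ge\psi^\tau(\boldsymbol{j}^0)+\sum_{t\in[N]}(\psi^\tau(\boldsymbol{j}^t)-\psi^\tau(\boldsymbol{j}^{t-1}))z''_{\pi_t},$$ is an ideal MIP formulation of $\{(\boldsymbol{x},\mu)\in\mathbb{R}^2\times\mathbb{R}:\mu=f_1(x_1)f_2(x_2),\ x_i\in\{p_{i0},\dots,p_{id_i}\},\ i=1,2\}$.
   Context: Here $n=2$. $\Delta^d=\{\boldsymbol{z}\in\mathbb{R}^d:1\ge z_1\ge\cdots\ge z_d\ge0\}$; $\boldsymbol{z}=(\boldsymbol{z}_1,\boldsymbol{z}_2)$, $\boldsymbol{z}_i\in\mathbb{R}^{d_i}$. $B_i=\{(x_i,\boldsymbol{z}_i):x_i=p_{i0}+\sum_{j\in[d_i]}(p_{ij}-p_{i,j-1})z_{ij},\ \boldsymbol{z}_i\in\Delta^{d_i}\}$. A staircase is $\pi=(\pi_1,\dots,\pi_N)$, $\pi_t=(\pi_t(1),\pi_t(2))$, $\pi_t(1)\in\{1,2\}$, each $i$ occurring as $\pi_t(1)$ exactly $d_i$ times, $\pi_t(2)=|\{s\le t:\pi_s(1)=\pi_t(1)\}|$; $\Pi$ is the set of staircases; $z_{\pi_t}:=z_{\pi_t(1),\pi_t(2)}$; point representation $\boldsymbol{j}^0=(0,0)$, $\boldsymbol{j}^t=\boldsymbol{j}^{t-1}+\boldsymbol{e}_{\pi_t(1)}$. For a permutation $\rho_i$ of $\{0,\dots,d_i\}$: $T_i:\boldsymbol{z}_i\mapsto\boldsymbol{\lambda}_i\in\mathbb{R}^{d_i+1}$,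 $\lambda_{ij}=z_{ij}-z_{i,j+1}$ ($j=0,\dots,d_i$, $z_{i0}=1$, $z_{i,d_i+1}=0$), $T_i^{-1}:z_{ij}=\sum_{k=j}^{d_i}\lambda_{ik}$; $P^{\rho_i}$ the permutation matrix with $(j,k)$ entry $1$ iff $j=\rho_i(k)$; $L^{\rho_i}=T_i^{-1}\circ P^{\rho_i}\circ T_i$ and $L^\rho(\boldsymbol{z}')=(L^{\rho_1}(\boldsymbol{z}'_1),L^{\rho_2}(\boldsymbol{z}'_2))$ (an invertible affine map). An MIP formulation of $S$ is a polyhedron with binary restrictions whose projection onto original variables equals $S$; ideal means every vertex of the LP relaxation has binary values in the binary-restricted variables. *)

(* Defs.v *)
From HB Require Import structures.
From mathcomp Require Import all_boot all_order all_algebra all_fingroup.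
From mathcomp Require Import reals.
Set Implicit Arguments. Unset Strict Implicit. Unset Printing Implicit Defensive.
Import Order.TTheory GRing.Theory Num.Theory.
Local Open Scope ring_scope.

Section Defs.
Variable R : realType.

(* z_i in R^{d} is a row vector; zget z j = z_{j} for 1 <= j <= d (paper
   1-based indexing), with the conventions z_0 = 1 and z_j = 0 for j > d. *)
Definition zget (d : nat) (z : 'rV[R]_d) (j : nat) : R :=
  if j == 0%N then 1 else
  match (insub j.-1 : option 'I_d) with Some k => z 0 k | None => 0 end.

Definition inDelta (d : nat) (z : 'rV[R]_d) : Prop :=
  forall j : nat, (j <= d)%N -> zget z j.+1 <= zget z j.

Definition inB (d : nat) (p : nat -> R) (x : R) (z : 'rV[R]_d) : Prop :=
  x = p 0%N + \sum_(j < d) (p j.+1 - p j) * z 0 j /\ inDelta z.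

Definition Tmap (d : nat) (z : 'rV[R]_d) : 'rV[R]_d.+1 :=
  \row_(j < d.+1) (zget z j - zget z j.+1).

Definition Tinv (d : nat) (l : 'rV[R]_d.+1) : 'rV[R]_d :=
  \row_(j < d) \sum_(k < d.+1 | (j.+1 <= k)%N) l 0 k.

Definition Pmx (d : nat) (rho : 'S_d.+1) : 'M[R]_d.+1 :=
  \matrix_(j < d.+1, k < d.+1) (j == rho k)%:R.

(* L^rho = T^{-1} o P^rho o T  (vectors stored as rows: P lambda = lambda *m P^T) *)
Definition Lmap (d : nat) (rho : 'S_d.+1) (z : 'rV[R]_d) : 'rV[R]_d :=
  Tinv (Tmap z *m (Pmx rho)^T).

Definition Linv (d : nat) (rho : 'S_d.+1) (z : 'rV[R]_d) : 'rV[R]_d :=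
  Tinv (Tmap z *m (invmx (Pmx rho))^T).

(* Staircases for n = 2: sequences pi = [pi_1(1); ...; pi_N(1)] with entries
   in {1,2}, value i occurring exactly d_i times. *)
Definition staircase (d1 d2 : nat) (pi : seq nat) : Prop :=
  all (fun i => (i == 1%N) || (i == 2%N)) pi /\
  count_mem 1%N pi = d1 /\ count_mem 2%N pi = d2.

Definition jpt (pi : seq nat) (t : nat) : nat * nat :=
  (count_mem 1%N (take t pi), count_mem 2%N (take t pi)).

Definition zpi (d1 d2 : nat) (z1 : 'rV[R]_d1) (z2 : 'rV[R]_d2)
    (pi : seq nat) (t : nat) : R :=
  let i := nth 0%N pi t.-1 in
  let k := count_mem i (take t pi) in
  if i == 1%N then zget z1 k else zget z2 k.

Definition psi (d1 d2 : nat) (p1 p2 : nat -> R) (f1 f2 : R -> R)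
    (rho1 : 'S_d1.+1) (rho2 : 'S_d2.+1) (j : nat * nat) : R :=
  f1 (p1 (rho1 (inord j.1))) * f2 (p2 (rho2 (inord j.2))).

Definition stair_bound (d1 d2 : nat) (ps : nat * nat -> R)
    (z1 : 'rV[R]_d1) (z2 : 'rV[R]_d2) (pi : seq nat) : R :=
  ps (jpt pi 0) +
  \sum_(1 <= t < (d1 + d2).+1) (ps (jpt pi t) - ps (jpt pi t.-1)) * zpi z1 z2 pi t.

Definition pt (d1 d2 : nat) : Type := (R * R * 'rV[R]_d1 * 'rV[R]_d2 * R)%type.

Definition mixpt (d1 d2 : nat) (t : R) (a b : pt d1 d2) : pt d1 d2 :=
  let: (a1, a2, a3, a4, a5) := a in
  let: (b1, b2, b3, b4, b5) := b in
  (t * a1 + (1 - t) * b1, t * a2 + (1 - t) * b2,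
   t *: a3 + (1 - t) *: b3, t *: a4 + (1 - t) *: b4, t * a5 + (1 - t) * b5).

Definition vertex (d1 d2 : nat) (Q : pt d1 d2 -> Prop) (v : pt d1 d2) : Prop :=
  Q v /\ forall (a b : pt d1 d2) (t : R), Q a -> Q b -> 0 < t < 1 ->
    v = mixpt t a b -> a = b.

Definition binary (d : nat) (z : 'rV[R]_d) : Prop :=
  forall j : 'I_d, z 0 j = 0 \/ z 0 j = 1.

Definition relax (d1 d2 : nat) (p1 p2 : nat -> R) (f1 f2 : R -> R)
    (s1 : 'S_d1.+1) (s2 : 'S_d2.+1) (t1 : 'S_d1.+1) (t2 : 'S_d2.+1)
    (v : pt d1 d2) : Prop :=
  let: (x1, x2, z1, z2, mu) := v in
  inB p1 x1 z1 /\ inB p2 x2 z2 /\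
  let z1' := Linv s1 z1 in let z2' := Linv s2 z2 in
  let z1'' := Linv t1 z1 in let z2'' := Linv t2 z2 in
  forall pi : seq nat, staircase d1 d2 pi ->
    mu <= stair_bound (psi p1 p2 f1 f2 s1 s2) z1' z2' pi /\
    stair_bound (psi p1 p2 f1 f2 t1 t2) z1'' z2'' pi <= mu.

End Defs.

(* Main.v *)
Require Import Defs.
From HB Require Import structures.
From mathcomp Require Import all_boot all_order all_algebra all_fingroup.
From mathcomp Require Import reals zify ring lra.
Import Order.TTheory GRing.Theory Num.Theory.
Local Open Scope ring_scope.
Set Implicit Arguments. Unset Strict Implicit. Unset Printing Implicit Defensive.

Section Basics.
Variable R : realType.

Lemma zget0 d (z : 'rV[R]_d) : zget z 0 = 1.
Proof. by []. Qed.

Lemma zgetS d (z : 'rV[R]_d) (j : 'I_d) : zget z j.+1 = z 0 j.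
Proof. by rewrite /zget /= (insubT (fun k => k < d)%N (ltn_ord j)) /=; congr (z _ _); apply: val_inj. Qed.

Lemma zget_big d (z : 'rV[R]_d) j : (d < j)%N -> zget z j = 0.
Proof.
move=> hj; rewrite /zget; case: eqP => [hj0|_]; first by rewrite hj0 in hj.
by rewrite insubF //; case: j hj => //= j hj; rewrite ltnNge -ltnS hj.
Qed.

Lemma zget_mix d (t : R) (a b : 'rV[R]_d) j :
  zget (t *: a + (1 - t) *: b) j = t * zget a j + (1 - t) * zget b j.
Proof.
rewrite /zget; case: eqP => _; first by rewrite !mulr1 addrC subrK.
by case: insub => [k|]; rewrite ?mxE ?mulr0 ?addr0.
Qed.

Definition lam d (z : 'rV[R]_d) (m : nat) := zget z m - zget z m.+1.

Lemma sum_geq n l (F : nat -> R) :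
  \sum_(k < n | (l <= k)%N) F k = \sum_(l <= k < n) F k.
Proof. by rewrite big_geq_mkord; apply: eq_bigl => k; rewrite andTb. Qed.

Lemma Pmx_inv d (rho : 'S_d.+1) : invmx (Pmx R rho) = (Pmx R rho)^T.
Proof.
have h : Pmx R rho *m (Pmx R rho)^T = 1%:M.
  apply/matrixP => i j; rewrite !mxE (bigD1 (rho^-1 i)%g) //= big1.
    rewrite !mxE permKV eqxx mul1r addr0 eq_sym.
    by case: (eqVneq i j).
  move=> k hk; rewrite !mxE; case: (eqVneq i (rho k)) => [e|]; last by rewrite mul0r.
  by rewrite e permK eqxx in hk.
have [u1 _] := mulmx1_unit h.
by rewrite -[LHS]mulmx1 -h mulKmx.
Qed.

Lemma Linv_entry d (rho : 'S_d.+1) (z : 'rV[R]_d) (j : 'I_d) :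
  Linv rho z 0 j = \sum_(k < d.+1 | (j.+1 <= k)%N) lam z (rho k).
Proof.
rewrite /Linv /Tinv mxE; apply: eq_bigr => k _.
rewrite Pmx_inv trmxK mxE (bigD1 (rho k)) //= big1 ?addr0.
  by rewrite !mxE eqxx mulr1.
by move=> m hm; rewrite !mxE (negbTE hm) mulr0.
Qed.

Lemma lam_sum d (z : 'rV[R]_d) : \sum_(k < d.+1) lam z k = 1.
Proof.
rewrite -(big_mkord xpredT (lam z)).
rewrite (telescope_sumr_eq (fun k => - zget z k)) //.
  by rewrite zget_big // oppr0 opprK zget0 add0r.
by move=> k _; rewrite /lam opprK addrC.
Qed.

Lemma zget_Linv d (rho : 'S_d.+1) (z : 'rV[R]_d) l :
  zget (Linv rho z) l = \sum_(k < d.+1 | (l <= k)%N) lam z (rho k).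
Proof.
case: l => [|l].
  rewrite zget0 (eq_bigl xpredT) //.
  by rewrite -(lam_sum z) (reindex_inj (@perm_inj _ rho)) /=.
case: (ltnP l d) => hl.
  by rewrite (zgetS _ (Ordinal hl)) Linv_entry.
rewrite zget_big ?ltnS // big1 // => k hk.
by move: (ltn_ord k); rewrite ltnS => hk'; have := leq_trans hk hk'; rewrite ltnNge hl.
Qed.

End Basics.


Section Stair.
Variable R : realType.

Definition step (i : nat) (s : nat * nat) : nat * nat :=
  ((s.1 + (i == 1%N))%N, (s.2 + (i == 2%N))%N).
Definition cget (c1 c2 : nat -> R) (i : nat) (s : nat * nat) : R :=
  if i == 1%N then c1 s.1 else c2 s.2.
Fixpoint Bf (ps : nat * nat -> R) (c1 c2 : nat -> R) (s : nat * nat) (pi : seq nat) : R :=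
  match pi with
  | [::] => 0
  | i :: pi' => (ps (step i s) - ps s) * cget c1 c2 i (step i s) + Bf ps c1 c2 (step i s) pi'
  end.
Definition all12 (pi : seq nat) := all (fun i => (i == 1%N) || (i == 2%N)) pi.

Lemma stair_gen ps c1 c2 pi s : all12 pi ->
  \sum_(1 <= t < (size pi).+1)
     (ps ((s.1 + (jpt pi t).1)%N, (s.2 + (jpt pi t).2)%N)
      - ps ((s.1 + (jpt pi t.-1).1)%N, (s.2 + (jpt pi t.-1).2)%N)) *
     (if nth 0%N pi t.-1 == 1%N then c1 (s.1 + count_mem (nth 0%N pi t.-1) (take t pi))%N
      else c2 (s.2 + count_mem (nth 0%N pi t.-1) (take t pi))%N)
  = Bf ps c1 c2 s pi.
Proof.
elim: pi s => [|i pi IH] [s1 s2] /=.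
  by move=> _; rewrite big_geq.
case/andP=> hi hall.
rewrite big_nat_recl // -(IH _ hall).
have -> : step i (s1, s2) = ((s1 + (i == 1%N))%N, (s2 + (i == 2%N))%N) by [].
congr (_ + _).
  case/orP: hi => /eqP -> /=; by rewrite /cget /jpt /= take0 /= ?addn0.
apply: eq_big_nat => t /andP [ht1 ht2].
case: t ht1 ht2 => // t _ ht2 /=.
have hx : nth 0%N pi t \in pi by apply: mem_nth; rewrite -ltnS.
have := allP hall _ hx; set x := nth 0%N pi t.
rewrite /jpt /=.
case/orP: hi => /eqP ->; case/orP => /eqP ->; rewrite /= ?addnA ?addn0 ?addn1 //.
Qed.

Lemma all12_size pi : all12 pi -> size pi = (count_mem 1%N pi + count_mem 2%N pi)%N.
Proof.
elim: pi => //= i pi IH /andP [hi /IH ->].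
by case/orP: hi => /eqP -> /=; lia.
Qed.

Lemma stair_Bf d1 d2 (ps : nat * nat -> R) (z1 : 'rV[R]_d1) (z2 : 'rV[R]_d2) pi :
  staircase d1 d2 pi ->
  stair_bound ps z1 z2 pi = ps (0%N, 0%N) + Bf ps (zget z1) (zget z2) (0%N, 0%N) pi.
Proof.
case=> hall [h1 h2].
rewrite /stair_bound; congr (_ + _); first by rewrite /jpt take0.
rewrite -(stair_gen ps (zget z1) (zget z2) (0%N, 0%N) hall) all12_size // h1 h2.
apply: eq_bigr => t _ /=.
by rewrite /zpi !add0n.
Qed.

End Stair.


Section BfProps.
Variable R : realType.
Implicit Types (ps : nat * nat -> R).

Lemma Bf_scale ps c1 c2 (k : R) s pi :
  Bf ps (fun l => k * c1 l) (fun l => k * c2 l) s pi = k * Bf ps c1 c2 s pi.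
Proof.
elim: pi s => [|i pi IH] s /=; first by rewrite mulr0.
by rewrite IH mulrDr /cget; case: ifP => _; rewrite mulrCA.
Qed.

Lemma Bf_mix ps c1 c2 c1' c2' (t : R) s pi :
  Bf ps (fun l => t * c1 l + (1 - t) * c1' l) (fun l => t * c2 l + (1 - t) * c2' l) s pi
  = t * Bf ps c1 c2 s pi + (1 - t) * Bf ps c1' c2' s pi.
Proof.
elim: pi s => [|i pi IH] s /=; first by rewrite !mulr0 addr0.
rewrite IH /cget; case: ifP => _; ring.
Qed.

Lemma Bf_neg ps ps' c1 c2 s pi : (forall j, ps' j = - ps j) ->
  Bf ps' c1 c2 s pi = - Bf ps c1 c2 s pi.
Proof.
move=> h; elim: pi s => [|i pi IH] s /=; first by rewrite oppr0.
by rewrite IH !h; ring.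
Qed.

Definition encf (m : nat) (l : nat) : R := (l <= m)%N%:R.

Lemma mono_le (a : nat -> R) d : (forall i, (i < d)%N -> a i <= a i.+1) ->
  forall i j, (i <= j)%N -> (j <= d)%N -> a i <= a j.
Proof.
move=> ha i; elim=> [|j IH] hij hj; first by rewrite leqn0 in hij; rewrite (eqP hij).
rewrite leq_eqVlt in hij; case/orP: hij => [/eqP ->//|hij].
apply: le_trans (IH hij (ltnW hj)) (ha _ hj).
Qed.

Lemma clip (a b : nat -> R) m1 m2 d1 d2 pi s :
  (forall i, (i < d1)%N -> a i <= a i.+1) -> (forall i, (i < d2)%N -> b i <= b i.+1) ->
  all12 pi -> (s.1 + count_mem 1%N pi <= d1)%N -> (s.2 + count_mem 2%N pi <= d2)%N ->
  a (minn (s.1 + count_mem 1%N pi) m1) * b (minn (s.2 + count_mem 2%N pi) m2) <=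
  a (minn s.1 m1) * b (minn s.2 m2) +
  Bf (fun j => a j.1 * b j.2) (encf m1) (encf m2) s pi.
Proof.
move=> ha hb; elim: pi s => [|i pi IH] [s1 s2] /=.
  by rewrite !addn0 addr0.
case/andP=> hi hall; case/orP: hi => /eqP -> /=; rewrite /cget /= ?addn0 ?add0n => h1 h2.
- have hIH := IH (s1 + 1, s2)%N hall ltac:(simpl; lia) ltac:(simpl; lia).
  rewrite /= -addnA in hIH.
  apply: (le_trans hIH); rewrite /step /= addn0 addrA lerD2r /encf.
  case: (ltnP s1 m1) => hs.
    rewrite addn1 (minn_idPl hs) hs mulr1.
    have hA : a s1 <= a s1.+1 by apply: ha; move: h1; lia.
    have hB : b (minn s2 m2) <= b s2.
      by apply: (mono_le hb); [exact: geq_minl | move: h2; lia].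
    have hA' : 0 <= a s1.+1 - a s1 by rewrite subr_ge0.
    have hB' : 0 <= b s2 - b (minn s2 m2) by rewrite subr_ge0.
    have := mulr_ge0 hA' hB'.
    nra.
  rewrite addn1 ltnNge hs /= mulr0 addr0.
  by rewrite (minn_idPr (leq_trans hs (leqnSn _))).
- have hIH := IH (s1, s2 + 1)%N hall ltac:(simpl; lia) ltac:(simpl; lia).
  rewrite /= -addnA in hIH.
  apply: (le_trans hIH); rewrite /step /= addn0 addrA lerD2r /encf.
  case: (ltnP s2 m2) => hs.
    rewrite addn1 (minn_idPl hs) hs mulr1.
    have hB : b s2 <= b s2.+1 by apply: hb; move: h2; lia.
    have hA : a (minn s1 m1) <= a s1.
      by apply: (mono_le ha); [exact: geq_minl | move: h1; lia].
    have hA' : 0 <= a s1 - a (minn s1 m1) by rewrite subr_ge0.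
    have hB' : 0 <= b s2.+1 - b s2 by rewrite subr_ge0.
    have := mulr_ge0 hA' hB'.
    nra.
  rewrite addn1 ltnNge hs /= mulr0 addr0.
  by rewrite (minn_idPr (leq_trans hs (leqnSn _))).
Qed.

End BfProps.


Section Sorted.
Variable R : realType.

Fixpoint sortedf (c1 c2 : nat -> R) (s : nat * nat) (pi : seq nat) (a : R) : Prop :=
  match pi with
  | [::] => True
  | i :: pi' => cget c1 c2 i (step i s) <= a /\
                sortedf c1 c2 (step i s) pi' (cget c1 c2 i (step i s))
  end.

Lemma zero_tail (ps : nat * nat -> R) (c1 c2 : nat -> R) pi s :
  (forall l, 0 <= c1 l) -> (forall l, 0 <= c2 l) -> all12 pi ->
  sortedf c1 c2 s pi 0 ->
  (forall l, (s.1 + count_mem 1%N pi < l)%N -> c1 l = 0) ->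
  (forall l, (s.2 + count_mem 2%N pi < l)%N -> c2 l = 0) ->
  [/\ (forall l, (s.1 < l)%N -> c1 l = 0), (forall l, (s.2 < l)%N -> c2 l = 0) &
      Bf ps c1 c2 s pi = 0].
Proof.
move=> h1 h2; elim: pi s => [|i pi IH] [s1 s2] /=.
  by move=> _ _; rewrite !addn0 => z1 z2; split.
case/andP=> hi hall [hu hs].
have u0 : cget c1 c2 i (step i (s1, s2)) = 0.
  by apply/eqP; rewrite eq_le hu /cget; case: ifP => _; [apply: h1|apply: h2].
rewrite u0 in hs; have := IH _ hall hs.
case/orP: hi => /eqP ih; subst i; rewrite /step /cget /= in u0 * => H z1 z2.
- have [H1 H2 HB] := H ltac:(move=> l hl; apply: z1; simpl in *; lia)
                       ltac:(move=> l hl; apply: z2; simpl in *; lia).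
  rewrite HB addr0 u0 mulr0; split=> // l hl.
    by case: (ltngtP l (s1 + 1)%N) => [|/H1|->] //; lia.
  by apply: H2; simpl; lia.
- have [H1 H2 HB] := H ltac:(move=> l hl; apply: z1; simpl in *; lia)
                       ltac:(move=> l hl; apply: z2; simpl in *; lia).
  rewrite HB addr0 u0 mulr0; split=> // l hl.
    by apply: H1; simpl; lia.
  by case: (ltngtP l (s2 + 1)%N) => [|/H2|->] //; lia.
Qed.

Lemma sortedf_scale (c1 c2 : nat -> R) (k : R) s pi a : 0 < k ->
  sortedf c1 c2 s pi a ->
  sortedf (fun l => k^-1 * c1 l) (fun l => k^-1 * c2 l) s pi (k^-1 * a).
Proof.
move=> hk; elim: pi s a => [|i pi IH] s a //= [h1 h2].
have e : cget (fun l => k^-1 * c1 l) (fun l => k^-1 * c2 l) i (step i s)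
         = k^-1 * cget c1 c2 i (step i s) by rewrite /cget; case: ifP.
rewrite e; split; last exact: IH.
by rewrite ler_pM2l ?invr_gt0.
Qed.

Fixpoint mrg (c1 c2 : nat -> R) (d1 d2 : nat) (n : nat) (s : nat * nat) : seq nat :=
  match n with
  | 0 => [::]
  | n'.+1 => if (s.1 < d1)%N && ((d2 <= s.2)%N || (c2 s.2.+1 <= c1 s.1.+1))
             then 1%N :: mrg c1 c2 d1 d2 n' (step 1 s)
             else 2%N :: mrg c1 c2 d1 d2 n' (step 2 s)
  end.

Lemma mrg_sorted (c1 c2 : nat -> R) d1 d2 :
  (forall l, 0 <= c1 l) -> (forall l, 0 <= c2 l) ->
  (forall l, c1 l.+1 <= c1 l) -> (forall l, c2 l.+1 <= c2 l) ->
  (forall l, (d1 < l)%N -> c1 l = 0) -> (forall l, (d2 < l)%N -> c2 l = 0) ->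
  forall n s a, c1 s.1.+1 <= a -> c2 s.2.+1 <= a ->
  sortedf c1 c2 s (mrg c1 c2 d1 d2 n s) a.
Proof.
move=> p1 p2 m1 m2 z1 z2; elim=> [|n IH] [s1 s2] a //= ha1 ha2.
case: ifP => hc /=; rewrite /cget /step /= ?addn0 ?addn1.
- split=> //; apply: IH => //=.
  case/andP: hc => _ /orP [hd|//].
  by rewrite z2 ?p1 // ltnS.
- split=> //; apply: IH => //=.
  move/negbT: hc; rewrite negb_and negb_or -ltnNge -ltNge.
  case/orP => [hd|/andP [_ /ltW //]].
  by rewrite z1 ?p2 // ltnS leqNgt.
Qed.

Lemma mrg_count (c1 c2 : nat -> R) d1 d2 n s :
  (s.1 <= d1)%N -> (s.2 <= d2)%N -> n = ((d1 - s.1) + (d2 - s.2))%N ->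
  [/\ all12 (mrg c1 c2 d1 d2 n s), count_mem 1%N (mrg c1 c2 d1 d2 n s) = (d1 - s.1)%N &
      count_mem 2%N (mrg c1 c2 d1 d2 n s) = (d2 - s.2)%N].
Proof.
elim: n s => [|n IH] [s1 s2] /= h1 h2 hn.
  by split=> //; lia.
case: ifP => hc /=; rewrite /step /= ?addn0 ?addn1.
- case/andP: hc => hc _.
  have [a b c] := IH (s1.+1, s2) hc h2 ltac:(simpl; lia).
  by split=> //=; rewrite ?b ?c /=; lia.
- have hs2 : (s2 < d2)%N.
    move/negbT: hc; rewrite negb_and negb_or -ltnNge; case/orP => [hd|/andP [hd _]]; lia.
  have [a b c] := IH (s1, s2.+1) h1 hs2 ltac:(simpl; lia).
  by split=> //=; rewrite ?b ?c /=; lia.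
Qed.

Lemma Bf_enc_zero (ps : nat * nat -> R) m1 m2 pi s :
  all12 pi -> (m1 <= s.1)%N -> (m2 <= s.2)%N -> Bf ps (encf R m1) (encf R m2) s pi = 0.
Proof.
elim: pi s => [|i pi IH] [s1 s2] //= /andP [hi hall] h1 h2.
case/orP: hi => /eqP ->; rewrite /step /cget /encf /= ?addn0 ?addn1.
- by rewrite IH //= ?ltnNge ?(leq_trans h1) // mulr0 add0r.
- by rewrite IH //= ?ltnNge ?(leq_trans h2) // mulr0 add0r.
Qed.

Lemma Bf_nseq1 (ps : nat * nat -> R) m1 c2 n pi s : (s.1 + n <= m1)%N ->
  Bf ps (encf R m1) c2 s (nseq n 1%N ++ pi) =
  ps ((s.1 + n)%N, s.2) - ps s + Bf ps (encf R m1) c2 ((s.1 + n)%N, s.2) pi.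
Proof.
elim: n s => [|n IH] [s1 s2] /= h.
  by rewrite addn0 subrr add0r.
rewrite IH /step /cget /encf /= ?addn0 ?addn1; last by simpl; lia.
have -> : (s1.+1 <= m1)%N by lia.
rewrite mulr1 addSnnS addrA; congr (_ + _); ring.
Qed.

Lemma Bf_nseq2 (ps : nat * nat -> R) c1 m2 n pi s : (s.2 + n <= m2)%N ->
  Bf ps c1 (encf R m2) s (nseq n 2%N ++ pi) =
  ps (s.1, (s.2 + n)%N) - ps s + Bf ps c1 (encf R m2) (s.1, (s.2 + n)%N) pi.
Proof.
elim: n s => [|n IH] [s1 s2] /= h.
  by rewrite addn0 subrr add0r.
rewrite IH /step /cget /encf /= ?addn0 ?addn1; last by simpl; lia.
have -> : (s2.+1 <= m2)%N by lia.
rewrite mulr1 addSnnS addrA; congr (_ + _); ring.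
Qed.

Definition pi0 d1 d2 m1 m2 :=
  nseq m1 1%N ++ nseq m2 2%N ++ nseq (d1 - m1) 1%N ++ nseq (d2 - m2) 2%N.

Lemma pi0_stair d1 d2 m1 m2 : (m1 <= d1)%N -> (m2 <= d2)%N ->
  staircase d1 d2 (pi0 d1 d2 m1 m2).
Proof.
move=> h1 h2; rewrite /staircase /pi0 !all_cat !count_cat !all_nseq !count_nseq /=.
split; first by rewrite !orbT.
by split; lia.
Qed.

Lemma Bf_pi0 (ps : nat * nat -> R) d1 d2 m1 m2 :
  ps (0%N, 0%N) + Bf ps (encf R m1) (encf R m2) (0%N, 0%N) (pi0 d1 d2 m1 m2) = ps (m1, m2).
Proof.
rewrite /pi0 Bf_nseq1 //= Bf_nseq2 //= !add0n Bf_enc_zero //=; last first.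
  by rewrite /all12 all_cat !all_nseq !orbT.
by rewrite addr0; ring.
Qed.

End Sorted.


Section Geo.
Variable R : realType.

Definition Lrow d (rho : 'S_d.+1) (c : nat -> R) : 'rV[R]_d :=
  \row_(j < d) \sum_(k < d.+1 | (j.+1 <= k)%N) (c (rho^-1 k)%g - c (rho^-1 k)%g.+1).
Definition encz d (k : nat) : 'rV[R]_d := \row_(j < d) (j < k)%N%:R.
Definition xof (p : nat -> R) d (Z : 'rV[R]_d) : R :=
  p 0%N + \sum_(j < d) (p j.+1 - p j) * Z 0 j.

Lemma sum_single n (P : pred 'I_n) (k0 : 'I_n) :
  \sum_(k < n | P k) (k == k0)%:R = (P k0)%:R :> R.
Proof.
rewrite big_mkcond (bigD1 k0) //= eqxx big1 ?addr0; first by case: (P k0).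
by move=> k hk; rewrite (negbTE hk); case: (P k).
Qed.

Lemma lam_split d (F : 'I_d.+1 -> R) (m : 'I_d.+1) :
  \sum_(k < d.+1 | (m <= k)%N) F k = F m + \sum_(k < d.+1 | (m.+1 <= k)%N) F k.
Proof.
rewrite (bigD1 m) //=; congr (_ + _); apply: eq_bigl => k.
by rewrite andbC ltn_neqAle eq_sym.
Qed.

Lemma Lrow_Linv d (rho : 'S_d.+1) (z : 'rV[R]_d) :
  Lrow rho (zget (Linv rho z)) = z.
Proof.
apply/matrixP => i j; rewrite mxE (ord1 i).
transitivity (\sum_(k < d.+1 | (j.+1 <= k)%N) lam z k).
  apply: eq_bigr => k _.
  rewrite !zget_Linv lam_split addrK.
  by rewrite permKV.
rewrite sum_geq (telescope_sumr_eq (fun k => - zget z k)).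
- by rewrite zget_big // oppr0 opprK add0r zgetS.
- exact: leqW.
- by move=> k _; rewrite /lam opprK addrC.
Qed.

Lemma zget_encz d k l : (k <= d)%N -> zget (encz d k) l = (l <= k)%N%:R.
Proof.
move=> hk; case: l => [|l]; first by rewrite zget0.
case: (ltnP l d) => hl.
  by rewrite (zgetS _ (Ordinal hl)) mxE.
rewrite zget_big ?ltnS //; suff -> : (l.+1 <= k)%N = false by [].
apply/negbTE; rewrite -ltnNge ltnS; exact: leq_trans hk hl.
Qed.

Lemma Lrow_enc d (rho : 'S_d.+1) m : (m <= d)%N ->
  Lrow rho (encf R m) = encz d (rho (inord m)).
Proof.
move=> hm; apply/matrixP => i j; rewrite !mxE.
transitivity (\sum_(k < d.+1 | (j.+1 <= k)%N) (k == rho (inord m))%:R : R).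
  apply: eq_bigr => k _; rewrite /encf.
  have -> : (k == rho (inord m)) = ((rho^-1)%g k == m :> nat).
    apply/eqP/eqP => [->|h]; first by rewrite permK inordK.
    by rewrite -[k](permKV rho); congr (rho _); apply: val_inj; rewrite /= h inordK.
  by case: (ltngtP ((rho^-1)%g k) m) => h; rewrite /= ?subrr ?subr0.
by rewrite sum_single.
Qed.

Lemma xof_enc (p : nat -> R) d k : (k <= d)%N -> xof p (encz d k) = p k.
Proof.
move=> hk; rewrite /xof.
transitivity (p 0%N + \sum_(0 <= j < k) (p j.+1 - p j)).
  congr (_ + _); rewrite (big_nat_widen _ _ _ _ _ hk) big_mkord big_mkcond /=.
  by rewrite [RHS]big_mkcond; apply: eq_bigr => j _; rewrite mxE; case: (j < k)%N; rewrite ?mulr1 ?mulr0.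
by rewrite (telescope_sumr p (leq0n k)) addrC subrK.
Qed.

Lemma lam_ge0 d (z : 'rV[R]_d) m : inDelta z -> 0 <= lam z m.
Proof.
move=> hz; rewrite /lam subr_ge0; case: (leqP m d) => hm; first exact: hz.
by rewrite !zget_big // ltnW.
Qed.

Lemma cLinv_ge0 d (rho : 'S_d.+1) (z : 'rV[R]_d) l : inDelta z -> 0 <= zget (Linv rho z) l.
Proof. by move=> hz; rewrite zget_Linv sumr_ge0 // => k _; apply: lam_ge0. Qed.

Lemma cLinv_noninc d (rho : 'S_d.+1) (z : 'rV[R]_d) l : inDelta z ->
  zget (Linv rho z) l.+1 <= zget (Linv rho z) l.
Proof.
move=> hz; rewrite !zget_Linv [X in X <= _]big_mkcond [X in _ <= X]big_mkcond.
apply: ler_sum => k _; case: ifP => h; first by rewrite (ltnW h).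
by case: ifP => _ //; apply: lam_ge0.
Qed.

Lemma lam_mix d (t : R) (a b : 'rV[R]_d) m :
  lam (t *: a + (1 - t) *: b) m = t * lam a m + (1 - t) * lam b m.
Proof. by rewrite /lam !zget_mix; ring. Qed.

Lemma cLinv_mix d (rho : 'S_d.+1) (t : R) (a b : 'rV[R]_d) :
  zget (Linv rho (t *: a + (1 - t) *: b)) =
  (fun l => t * zget (Linv rho a) l + (1 - t) * zget (Linv rho b) l).
Proof.
apply: boolp.funext => l; rewrite !zget_Linv !mulr_sumr -big_split /=.
by apply: eq_bigr => k _; rewrite lam_mix.
Qed.

Lemma cLinv_enc d (rho : 'S_d.+1) k : (k <= d)%N ->
  zget (Linv rho (encz d k)) = encf R ((rho^-1)%g (inord k)).
Proof.
move=> hk; apply: boolp.funext => l; rewrite zget_Linv /encf.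
transitivity (\sum_(k' < d.+1 | (l <= k')%N) (k' == (rho^-1)%g (inord k))%:R : R).
  apply: eq_bigr => k' _; rewrite /lam !zget_encz //.
  have -> : (k' == (rho^-1)%g (inord k)) = (rho k' == k :> nat).
    apply/eqP/eqP => [->|h]; first by rewrite permKV inordK.
    by rewrite -[k'](permK rho); congr (_ _); apply: val_inj; rewrite /= h inordK.
  by case: (ltngtP (rho k') k) => h; rewrite /= ?subrr ?subr0.
by rewrite sum_single.
Qed.

Lemma Lrow_mix d (rho : 'S_d.+1) (t : R) (c c' : nat -> R) :
  Lrow rho (fun l => t * c l + (1 - t) * c' l) = t *: Lrow rho c + (1 - t) *: Lrow rho c'.
Proof.
apply/matrixP => i j; rewrite !mxE !mulr_sumr -big_split /=.
by apply: eq_bigr => k _; ring.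
Qed.

Lemma xof_mix (p : nat -> R) d (t : R) (Z Z' : 'rV[R]_d) :
  xof p (t *: Z + (1 - t) *: Z') = t * xof p Z + (1 - t) * xof p Z'.
Proof.
rewrite /xof !mulrDr !mulr_sumr addrACA -big_split /=.
congr (_ + _); first ring.
by apply: eq_bigr => j _; rewrite !mxE; ring.
Qed.

End Geo.


Section Hull.
Variables (R : realType) (d1 d2 : nat) (p1 p2 : nat -> R) (f1 f2 : R -> R).

Definition Phi (r1 : 'S_d1.+1) (r2 : 'S_d2.+1) (c1 c2 : nat -> R) (mu : R) : pt R d1 d2 :=
  (xof p1 (Lrow r1 c1), xof p2 (Lrow r2 c2), Lrow r1 c1, Lrow r2 c2, mu).
Definition gridpt (k1 k2 : nat) : pt R d1 d2 :=
  (p1 k1, p2 k2, encz R d1 k1, encz R d2 k2, f1 (p1 k1) * f2 (p2 k2)).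
Definition gridS (v : pt R d1 d2) : Prop :=
  exists k1 k2, [/\ (k1 <= d1)%N, (k2 <= d2)%N & v = gridpt k1 k2].
Inductive hull (S : pt R d1 d2 -> Prop) : pt R d1 d2 -> Prop :=
  | hull_base v : S v -> hull S v
  | hull_mix (t : R) a b : 0 <= t <= 1 -> hull S a -> hull S b -> hull S (mixpt t a b).
Definition hat (c : nat -> R) (n : nat) := fun l => if (l <= n)%N then 1 else c l.

Lemma Phi_mix r1 r2 (t : R) c1 c2 c1' c2' mu mu' :
  Phi r1 r2 (fun l => t * c1 l + (1 - t) * c1' l) (fun l => t * c2 l + (1 - t) * c2' l)
      (t * mu + (1 - t) * mu') = mixpt t (Phi r1 r2 c1 c2 mu) (Phi r1 r2 c1' c2' mu').
Proof.
rewrite /Phi (Lrow_mix r1 t c1 c1') (Lrow_mix r2 t c2 c2') !xof_mix.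
reflexivity.
Qed.

Lemma grid_Phi r1 r2 s1 s2 : (s1 <= d1)%N -> (s2 <= d2)%N ->
  gridS (Phi r1 r2 (encf R s1) (encf R s2) (psi p1 p2 f1 f2 r1 r2 (s1, s2))).
Proof.
move=> h1 h2; exists (r1 (inord s1)), (r2 (inord s2)); split.
- by rewrite -ltnS.
- by rewrite -ltnS.
rewrite /Phi !Lrow_enc // !xof_enc; [reflexivity | by rewrite -ltnS | by rewrite -ltnS].
Qed.

Lemma hull_pt r1 r2 pi : forall s c1 c2,
  (forall l, 0 <= c1 l) -> (forall l, 0 <= c2 l) -> all12 pi ->
  sortedf c1 c2 s pi 1 ->
  (forall l, (s.1 + count_mem 1%N pi < l)%N -> c1 l = 0) ->
  (forall l, (s.2 + count_mem 2%N pi < l)%N -> c2 l = 0) ->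
  (s.1 + count_mem 1%N pi <= d1)%N -> (s.2 + count_mem 2%N pi <= d2)%N ->
  hull gridS (Phi r1 r2 (hat c1 s.1) (hat c2 s.2)
     (psi p1 p2 f1 f2 r1 r2 s + Bf (psi p1 p2 f1 f2 r1 r2) c1 c2 s pi)).
Proof.
set ps := psi p1 p2 f1 f2 r1 r2.
have base : forall s c1 c2 pi, (forall l, (s.1 < l)%N -> c1 l = 0) ->
    (forall l, (s.2 < l)%N -> c2 l = 0) -> Bf ps c1 c2 s pi = 0 ->
    (s.1 <= d1)%N -> (s.2 <= d2)%N ->
    hull gridS (Phi r1 r2 (hat c1 s.1) (hat c2 s.2) (ps s + Bf ps c1 c2 s pi)).
  move=> [s1 s2] c1 c2 pi' z1 z2 hB h1 h2; rewrite hB addr0.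
  have -> : hat c1 s1 = encf R s1.
    apply: boolp.funext => l; rewrite /hat /encf; case: leqP => // h; rewrite z1 //.
  have -> : hat c2 s2 = encf R s2.
    apply: boolp.funext => l; rewrite /hat /encf; case: leqP => // h; rewrite z2 //.
  by apply: hull_base; apply: grid_Phi.
elim: pi => [|i pi IH] [s1 s2] c1 c2 p1c p2c.
  move=> _ _ z1 z2 h1 h2.
  apply: (base (s1, s2) c1 c2 [::]).
  - by move=> l hl; apply: z1; rewrite /= addn0.
  - by move=> l hl; apply: z2; rewrite /= addn0.
  - by [].
  - by move: h1; rewrite /= addn0.
  - by move: h2; rewrite /= addn0.
case/andP=> hi hall [hu hs] z1 z2 h1 h2.
set u := cget c1 c2 i (step i (s1, s2)) in hu hs.
have u_ge0 : 0 <= u by rewrite /u /cget; case: ifP.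
have [u0|unz] := eqVneq u 0.
  have st0 : sortedf c1 c2 (s1, s2) (i :: pi) 0.
    by split; [rewrite -/u u0 | exact: hs].
  have a12 : all12 (i :: pi) by rewrite /all12 /= hi.
  have [Z1 Z2 HB] := zero_tail ps p1c p2c a12 st0 z1 z2.
  have := base (s1, s2) c1 c2 (i :: pi) Z1 Z2 HB ltac:(simpl in *; lia) ltac:(simpl in *; lia).
  by [].
have upos : 0 < u.
  by rewrite lt0r unz u_ge0.
pose c1' := fun l => u^-1 * c1 l.
pose c2' := fun l => u^-1 * c2 l.
have hs' : sortedf c1' c2' (step i (s1, s2)) pi 1.
  by have := sortedf_scale upos hs; rewrite mulVf.
have IH' := IH (step i (s1, s2)) c1' c2'
  ltac:(by move=> l; apply: mulr_ge0; [rewrite invr_ge0; exact: ltW | exact: p1c])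
  ltac:(by move=> l; apply: mulr_ge0; [rewrite invr_ge0; exact: ltW | exact: p2c]) hall hs'.
case/orP: hi => /eqP ei; subst i.
- have ue : u = c1 (s1 + 1)%N by [].
  rewrite /step /= addn0 in IH' hs'.
  have IH'' := IH' ltac:(move=> l hl; rewrite /c1' z1 ?mulr0 //; simpl in *; lia)
                   ltac:(move=> l hl; rewrite /c2' z2 ?mulr0 //; simpl in *; lia)
                   ltac:(simpl in *; lia) ltac:(simpl in *; lia).
  rewrite (_ : Phi _ _ _ _ _ = mixpt u
     (Phi r1 r2 (hat c1' (s1 + 1)%N) (hat c2' s2) (ps ((s1 + 1)%N, s2) + Bf ps c1' c2' ((s1 + 1)%N, s2) pi))
     (Phi r1 r2 (encf R s1) (encf R s2) (ps (s1, s2)))).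
    apply: hull_mix; first by rewrite u_ge0 hu.
      exact: IH''.
    by apply: hull_base; apply: grid_Phi; simpl in *; lia.
  rewrite -Phi_mix; congr Phi.
  - apply: boolp.funext => l; rewrite /hat /encf /c1' /=.
    case: (ltngtP l (s1 + 1)%N) => h.
    + have h' : (l <= s1)%N by lia.
      by rewrite h' /= mulr1n mulr1; ring.
    + have h' : (l <= s1)%N = false by lia.
      have h'' : (l <= s1 + 1)%N = false by lia.
      by rewrite ?h' ?h'' /= mulr0n mulr0 addr0 mulrA mulfV // mul1r.
    + have h' : (l <= s1)%N = false by lia.
      by rewrite ?h' /= ?mulr0n ?mulr1 ?mulr0 ?addr0 ue h.
  - apply: boolp.funext => l; rewrite /hat /encf /c2' /=.
    case: leqP => h; first by rewrite /= mulr1n mulr1; ring.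
    by rewrite /= mulr0n mulr0 addr0 mulrA mulfV // mul1r.
  - rewrite /= /cget /step /= addn0 -ue /c1' /c2' Bf_scale mulrDr mulrA mulfV // mul1r.
    ring.
- have ue : u = c2 (s2 + 1)%N by [].
  rewrite /step /= addn0 in IH' hs'.
  have IH'' := IH' ltac:(move=> l hl; rewrite /c1' z1 ?mulr0 //; simpl in *; lia)
                   ltac:(move=> l hl; rewrite /c2' z2 ?mulr0 //; simpl in *; lia)
                   ltac:(simpl in *; lia) ltac:(simpl in *; lia).
  rewrite (_ : Phi _ _ _ _ _ = mixpt u
     (Phi r1 r2 (hat c1' s1) (hat c2' (s2 + 1)%N) (ps (s1, (s2 + 1)%N) + Bf ps c1' c2' (s1, (s2 + 1)%N) pi))
     (Phi r1 r2 (encf R s1) (encf R s2) (ps (s1, s2)))).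
    apply: hull_mix; first by rewrite u_ge0 hu.
      exact: IH''.
    by apply: hull_base; apply: grid_Phi; simpl in *; lia.
  rewrite -Phi_mix; congr Phi.
  - apply: boolp.funext => l; rewrite /hat /encf /c1' /=.
    case: leqP => h; first by rewrite /= mulr1n mulr1; ring.
    by rewrite /= mulr0n mulr0 addr0 mulrA mulfV // mul1r.
  - apply: boolp.funext => l; rewrite /hat /encf /c2' /=.
    case: (ltngtP l (s2 + 1)%N) => h.
    + have h' : (l <= s2)%N by lia.
      by rewrite h' /= mulr1n mulr1; ring.
    + have h' : (l <= s2)%N = false by lia.
      have h'' : (l <= s2 + 1)%N = false by lia.
      by rewrite ?h' ?h'' /= mulr0n mulr0 addr0 mulrA mulfV // mul1r.
    + have h' : (l <= s2)%N = false by lia.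
      by rewrite ?h' /= ?mulr0n ?mulr1 ?mulr0 ?addr0 ue h.
  - rewrite /= /cget /step /= addn0 -ue /c1' /c2' Bf_scale mulrDr mulrA mulfV // mul1r.
    ring.
Qed.

End Hull.


Section Final.
Variables (R : realType) (d1 d2 : nat) (p1 p2 : nat -> R) (f1 f2 : R -> R).
Variables (sg1 : 'S_d1.+1) (sg2 : 'S_d2.+1) (ta1 : 'S_d1.+1) (ta2 : 'S_d2.+1).

Local Notation Q := (relax p1 p2 f1 f2 sg1 sg2 ta1 ta2).

Lemma mixpt0 (a b : pt R d1 d2) : mixpt 0 a b = b.
Proof.
case: a => [[[[a1 a2] a3] a4] a5]; case: b => [[[[b1 b2] b3] b4] b5].
by rewrite /mixpt !mul0r !scale0r !add0r subr0 !mul1r !scale1r.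
Qed.

Lemma mixpt1 (a b : pt R d1 d2) : mixpt 1 a b = a.
Proof.
case: a => [[[[a1 a2] a3] a4] a5]; case: b => [[[[b1 b2] b3] b4] b5].
by rewrite /mixpt subrr !mul0r !scale0r !addr0 !mul1r !scale1r.
Qed.

Lemma mixpt_id (t : R) (a : pt R d1 d2) : mixpt t a a = a.
Proof.
case: a => [[[[a1 a2] a3] a4] a5].
by rewrite /mixpt -!mulrDl -!scalerDl addrC subrK !mul1r !scale1r.
Qed.

Lemma inB_mix d (p : nat -> R) (t : R) x x' (z z' : 'rV[R]_d) : 0 <= t <= 1 ->
  inB p x z -> inB p x' z' -> inB p (t * x + (1 - t) * x') (t *: z + (1 - t) *: z').
Proof.
case/andP=> ht0 ht1 [hx hd] [hx' hd']; split.
  by rewrite hx hx'; have := xof_mix p t z z'; rewrite /xof => ->.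
move=> j hj; rewrite !zget_mix; apply: lerD; apply: ler_wpM2l => //.
- exact: hd.
- by rewrite subr_ge0.
- exact: hd'.
Qed.

Lemma Q_mix (t : R) a b : 0 <= t <= 1 -> Q a -> Q b -> Q (mixpt t a b).
Proof.
move=> ht; case: a => [[[[a1 a2] a3] a4] a5]; case: b => [[[[b1 b2] b3] b4] b5].
case=> hB1 [hB2 hs]; case=> hB1' [hB2' hs']; split; first exact: inB_mix.
split; first exact: inB_mix.
move: hs hs'; cbv zeta => hs hs'; cbv zeta; move=> pi hpi; have [u1 l1] := hs pi hpi; have [u2 l2] := hs' pi hpi.
move: u1 l1 u2 l2; rewrite !stair_Bf // !cLinv_mix !Bf_mix.
case/andP: ht => ht0 ht1.
have ht1' : 0 <= 1 - t by rewrite subr_ge0.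
move=> u1 l1 u2 l2; split.
- have := ler_wpM2l ht0 u1; have := ler_wpM2l ht1' u2; lra.
- have := ler_wpM2l ht0 l1; have := ler_wpM2l ht1' l2; lra.
Qed.


Local Notation GS := (@gridS R d1 d2 p1 p2 f1 f2).

Lemma perm_inord_val d (r : 'S_d.+1) k : (k <= d)%N ->
  r (inord ((r^-1)%g (inord k))) = k :> nat.
Proof. by move=> hk; rewrite inord_val permKV inordK. Qed.

Lemma ord_le d (m : 'I_d.+1) : (m <= d)%N.
Proof. by rewrite -ltnS. Qed.

Lemma grid_in_Q k1 k2 :
  (forall j : nat, (j < d1)%N -> f1 (p1 (sg1 (inord j))) <= f1 (p1 (sg1 (inord j.+1)))) ->
  (forall j : nat, (j < d2)%N -> f2 (p2 (sg2 (inord j))) <= f2 (p2 (sg2 (inord j.+1)))) ->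
  (forall j : nat, (j < d1)%N -> f1 (p1 (ta1 (inord j))) <= f1 (p1 (ta1 (inord j.+1)))) ->
  (forall j : nat, (j < d2)%N -> f2 (p2 (ta2 (inord j))) >= f2 (p2 (ta2 (inord j.+1)))) ->
  (k1 <= d1)%N -> (k2 <= d2)%N -> Q (gridpt d1 d2 p1 p2 f1 f2 k1 k2).
Proof.
move=> hs1 hs2 ht1 ht2 h1 h2.
have hinB : forall d (p : nat -> R) k, (k <= d)%N -> inB p (p k) (encz R d k).
  move=> d p k hk; split; first by have := xof_enc p hk; rewrite /xof => ->.
  move=> j hj; rewrite !zget_encz // ler_nat.
  by case: (leqP j.+1 k) => h //; rewrite (ltnW h).
split; first exact: hinB.
split; first exact: hinB.
cbv zeta; move=> pi hpi.
have hpi' := hpi; case: hpi' => hall [hc1 hc2].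
rewrite !stair_Bf // !cLinv_enc //.
split.
- set m1 := (sg1^-1)%g (inord k1); set m2 := (sg2^-1)%g (inord k2).
  have := @clip R (fun j => f1 (p1 (sg1 (inord j)))) (fun j => f2 (p2 (sg2 (inord j))))
     m1 m2 d1 d2 pi (0%N, 0%N) hs1 hs2 hall.
  rewrite /= !add0n hc1 hc2 => /(_ (leqnn _) (leqnn _)).
  rewrite (minn_idPr (ord_le m1)) (minn_idPr (ord_le m2)) !min0n.
  rewrite !perm_inord_val //.
- set m1 := (ta1^-1)%g (inord k1); set m2 := (ta2^-1)%g (inord k2).
  have hb : forall j, (j < d2)%N -> - f2 (p2 (ta2 (inord j))) <= - f2 (p2 (ta2 (inord j.+1))).
    by move=> j hj; rewrite lerN2; apply: ht2.
  have := @clip R (fun j => f1 (p1 (ta1 (inord j)))) (fun j => - f2 (p2 (ta2 (inord j))))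
     m1 m2 d1 d2 pi (0%N, 0%N) ht1 hb hall.
  rewrite /= !add0n hc1 hc2 => /(_ (leqnn _) (leqnn _)).
  rewrite (minn_idPr (ord_le m1)) (minn_idPr (ord_le m2)) !min0n.
  rewrite !perm_inord_val //.
  rewrite (@Bf_neg R (psi p1 p2 f1 f2 ta1 ta2)); first last.
    by move=> j; rewrite mulrN.
  rewrite !mulrN /psi /= => H.
  lra.
Qed.


Lemma hull_sub (GQ : forall k1 k2, (k1 <= d1)%N -> (k2 <= d2)%N -> Q (gridpt d1 d2 p1 p2 f1 f2 k1 k2))
  v : hull GS v -> Q v.
Proof.
elim=> [w [k1 [k2 [h1 h2 ->]]] | t a b ht _ Qa _ Qb]; first exact: GQ.
exact: Q_mix.
Qed.

Lemma hull_vertex (GQ : forall k1 k2, (k1 <= d1)%N -> (k2 <= d2)%N -> Q (gridpt d1 d2 p1 p2 f1 f2 k1 k2))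
  v : hull GS v -> vertex Q v -> GS v.
Proof.
elim=> [w Sw _ //| t a b ht ha IHa hb IHb [Qv hv]].
have Qa := hull_sub GQ ha; have Qb := hull_sub GQ hb.
have [t0|tn0] := eqVneq t 0.
  by subst t; rewrite mixpt0 in Qv hv *; apply: IHb.
have [t1|tn1] := eqVneq t 1.
  by subst t; rewrite mixpt1 in Qv hv *; apply: IHa.
case/andP: ht => ht0 ht1.
have htt : 0 < t < 1 by rewrite !lt_def tn0 ht0 ht1 eq_sym tn1.
have eab := hv a b t Qa Qb htt erefl; subst b.
by rewrite mixpt_id in Qv hv *; apply: IHa.
Qed.

Lemma side_hull (r1 : 'S_d1.+1) (r2 : 'S_d2.+1) x1 x2 z1 z2 :
  inB p1 x1 z1 -> inB p2 x2 z2 ->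
  exists pi, staircase d1 d2 pi /\
    hull GS (x1, x2, z1, z2, stair_bound (psi p1 p2 f1 f2 r1 r2) (Linv r1 z1) (Linv r2 z2) pi).
Proof.
move=> hB1 hB2.
set c1 := zget (Linv r1 z1); set c2 := zget (Linv r2 z2).
set pi := mrg c1 c2 d1 d2 (d1 + d2) (0%N, 0%N).
have [hall hc1 hc2] := @mrg_count R c1 c2 d1 d2 (d1 + d2) (0%N, 0%N) (leq0n _) (leq0n _)
   ltac:(by rewrite /= !subn0).
rewrite /= !subn0 in hc1 hc2.
have hst : staircase d1 d2 pi by split.
exists pi; split=> //.
have n1 : forall l, 0 <= c1 l by move=> l; apply: cLinv_ge0; case: hB1.
have n2 : forall l, 0 <= c2 l by move=> l; apply: cLinv_ge0; case: hB2.
have m1 : forall l, c1 l.+1 <= c1 l by move=> l; apply: cLinv_noninc; case: hB1.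
have m2 : forall l, c2 l.+1 <= c2 l by move=> l; apply: cLinv_noninc; case: hB2.
have e1 : forall l, (d1 < l)%N -> c1 l = 0 by move=> l hl; rewrite /c1 zget_big.
have e2 : forall l, (d2 < l)%N -> c2 l = 0 by move=> l hl; rewrite /c2 zget_big.
have hsorted : sortedf c1 c2 (0%N, 0%N) pi 1.
  by apply: mrg_sorted => //=.
have H := hull_pt p1 p2 f1 f2 r1 r2 n1 n2 hall hsorted
  ltac:(by move=> l; rewrite /= add0n hc1; apply: e1)
  ltac:(by move=> l; rewrite /= add0n hc2; apply: e2)
  ltac:(by rewrite /= add0n hc1) ltac:(by rewrite /= add0n hc2).
have h1 : hat c1 0%N = c1.
  by apply: boolp.funext => -[|l] //=; rewrite /c1 zget0.
have h2 : hat c2 0%N = c2.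
  by apply: boolp.funext => -[|l] //=; rewrite /c2 zget0.
rewrite /= h1 h2 /Phi /c1 /c2 !Lrow_Linv /xof in H.
case: hB1 => -> _; case: hB2 => -> _.
by rewrite stair_Bf.
Qed.


Lemma Q_in_hull v : Q v -> hull GS v.
Proof.
case: v => [[[[x1 x2] z1] z2] mu] [hB1 [hB2 hs]].
move: hs; cbv zeta => hs.
have [piU [hU HU]] := side_hull sg1 sg2 hB1 hB2.
have [piL [hL HL]] := side_hull ta1 ta2 hB1 hB2.
have [muU _] := hs piU hU; have [_ muL] := hs piL hL.
set U := stair_bound _ _ _ piU in HU muU.
set L := stair_bound _ _ _ piL in HL muL.
have [eUL|nUL] := eqVneq U L.
  have -> : mu = U by apply/eqP; rewrite eq_le muU eUL muL.
  exact: HU.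
have hpos : 0 < U - L by rewrite lt_def subr_eq0 nUL subr_ge0 (le_trans muL muU).
set th := (mu - L) / (U - L).
have -> : (x1, x2, z1, z2, mu) = mixpt th (x1, x2, z1, z2, U) (x1, x2, z1, z2, L).
  rewrite /mixpt -!mulrDl -!scalerDl addrC subrK !mul1r !scale1r.
  congr (_, _); rewrite /th; field.
  by rewrite subr_eq0.
have th0 : 0 <= th by rewrite /th; apply: divr_ge0; [rewrite subr_ge0 | exact: ltW].
have th1 : th <= 1 by rewrite /th ler_pdivrMr // mul1r lerD2r.
by apply: hull_mix => //; rewrite th0 th1.
Qed.

Lemma bin_enc d (z : 'rV[R]_d) : binary z -> inDelta z ->
  exists k, (k <= d)%N /\ z = encz R d k.
Proof.
move=> hb hd.
have Pd : exists j, zget z j.+1 == 0 by exists d; rewrite zget_big.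
case: (ex_minnP Pd) => k /eqP Pk kmin.
have kd : (k <= d)%N by apply: kmin; rewrite zget_big.
exists k; split=> //; apply/matrixP => i j; rewrite (ord1 i) mxE -zgetS.
case: (ltnP j k) => h.
  have : zget z j.+1 != 0.
    by apply/negP => /kmin; rewrite leqNgt h.
  by rewrite zgetS; case: (hb j) => -> //; rewrite eqxx.
have : zget z j.+1 <= 0.
  rewrite -Pk -lerN2; apply: (@mono_le R (fun n => - zget z n) d.+1);
    try by rewrite ?ltnS ?ltn_ord ?(ltnW (ltn_ord j)).
  by move=> n hn; rewrite lerN2; apply: hd.
by rewrite zgetS; case: (hb j) => -> //; rewrite ler10.
Qed.

End Final.

Unset Implicit Arguments.

Theorem proposition3 (R : realType) (d1 d2 : nat) (p1 p2 : nat -> R)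
    (f1 f2 : R -> R)
    (s1 : 'S_d1.+1) (s2 : 'S_d2.+1) (t1 : 'S_d1.+1) (t2 : 'S_d2.+1) :
  (1 <= d1)%N -> (1 <= d2)%N ->
  (forall j : nat, (j < d1)%N -> p1 j < p1 j.+1) ->
  (forall j : nat, (j < d2)%N -> p2 j < p2 j.+1) ->
  (forall j : nat, (j < d1)%N ->
     f1 (p1 (s1 (inord j))) <= f1 (p1 (s1 (inord j.+1)))) ->
  (forall j : nat, (j < d2)%N ->
     f2 (p2 (s2 (inord j))) <= f2 (p2 (s2 (inord j.+1)))) ->
  (forall j : nat, (j < d1)%N ->
     f1 (p1 (t1 (inord j))) <= f1 (p1 (t1 (inord j.+1)))) ->
  (forall j : nat, (j < d2)%N ->
     f2 (p2 (t2 (inord j))) >= f2 (p2 (t2 (inord j.+1)))) ->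
  (* MIP formulation: projection of {relaxation, z binary} onto (x, mu) is S *)
  (forall x1 x2 mu : R,
     ((exists j1 : nat, (j1 <= d1)%N /\ x1 = p1 j1) /\
      (exists j2 : nat, (j2 <= d2)%N /\ x2 = p2 j2) /\
      mu = f1 x1 * f2 x2)
     <->
     (exists (z1 : 'rV[R]_d1) (z2 : 'rV[R]_d2),
        binary z1 /\ binary z2 /\
        relax p1 p2 f1 f2 s1 s2 t1 t2 (x1, x2, z1, z2, mu))) /\
  (* ideal: every vertex of the LP relaxation has binary z *)
  (forall v : pt R d1 d2, vertex (relax p1 p2 f1 f2 s1 s2 t1 t2) v ->
     binary v.1.1.2 /\ binary v.1.2).
Proof.
move=> _ _ _ _ hs1 hs2 ht1 ht2.
have GQ : forall k1 k2, (k1 <= d1)%N -> (k2 <= d2)%N ->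
    relax p1 p2 f1 f2 s1 s2 t1 t2 (gridpt d1 d2 p1 p2 f1 f2 k1 k2).
  by move=> k1 k2; apply: grid_in_Q.
have benc : forall d k, binary (encz R d k).
  by move=> d k j; rewrite mxE; case: (j < k)%N; [right | left].
split.
- move=> x1 x2 mu; split.
  + case=> [[j1 [hj1 ->]] [[j2 [hj2 ->]] ->]].
    exists (encz R d1 j1), (encz R d2 j2); split; first exact: benc.
    split; first exact: benc.
    exact: GQ.
  + case=> z1 [z2 [b1 [b2 [hB1 [hB2 hs]]]]].
    have [k1 [hk1 ez1]] := bin_enc b1 (proj2 hB1).
    have [k2 [hk2 ez2]] := bin_enc b2 (proj2 hB2).
    subst z1 z2.
    have ex1 : x1 = p1 k1 by case: hB1 => ->; have := xof_enc p1 hk1; rewrite /xof.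
    have ex2 : x2 = p2 k2 by case: hB2 => ->; have := xof_enc p2 hk2; rewrite /xof.
    split; first by exists k1.
    split; first by exists k2.
    move: hs; cbv zeta => hs.
    have [hu _] := hs _ (pi0_stair (ord_le ((s1^-1)%g (inord k1))) (ord_le ((s2^-1)%g (inord k2)))).
    have [_ hl] := hs _ (pi0_stair (ord_le ((t1^-1)%g (inord k1))) (ord_le ((t2^-1)%g (inord k2)))).
    rewrite stair_Bf in hu; last exact: pi0_stair (ord_le _) (ord_le _).
    rewrite stair_Bf in hl; last exact: pi0_stair (ord_le _) (ord_le _).
    rewrite !cLinv_enc // Bf_pi0 in hu.
    rewrite !cLinv_enc // Bf_pi0 in hl.
    rewrite /psi /= !perm_inord_val // -ex1 -ex2 in hu hl.
    by apply/eqP; rewrite eq_le hu hl.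
- move=> v hv; have Hv := Q_in_hull hv.1.
  have [k1 [k2 [h1 h2 ->]]] := hull_vertex GQ Hv hv.
  by split; apply: benc.
Qed.
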